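(* Every POP-graph $(G,\prec)$ has an elementary decomposition: there are elementary POP-graphs $(G_1,\prec_1),\dots,(G_n,\prec_n)$ such that $(G,\prec)=(G_n,\prec_n)\circ\cdots\circ(G_1,\prec_1)$.
   Context: A progressive graph is a finite directed acyclic graph (parallel edges allowed) in which every source and every sink has degree one; degree-one vertices are boundary vertices, the others internal. It is elementary if each connected component has at most one internal vertex. An input edge is an edge whose initial vertex is a boundary vertex; an output edge one whose terminal vertex is a boundary vertex. For edges write $e\to e'$ if $e\neq e'$ and there is a directed path whose first edge is $e$ and last edge is $e'$. A planar order on $G$ is a linear order $\prec$ on $E(G)$ such that (P1) $e_1\to e_2$ implies $e_1\prec e_2$; (P2) if $e_1\prec e_2\prec e_3$ and $e_1\to e_3$ then $e_1\to e_2$ or $e_2\to e_3$. A POP-graph is a progressive graph with a planar order; it is elementary if the graph is. Equality of POP-graphs means isomorphism (bijections of vertices and edges preserving incidence, direction and order). Composition: let $(G_1,\prec_1)$, $(G_2,\prec_2)$ be POP-graphs, $G_1$ with output edges $o_1\prec_1\cdots\prec_1 o_n$ and $G_2$ with input edges $i_1\prec_2\cdots\prec_2 i_n$. $G_2\circ G_1$ is obtained from $G_1\sqcup G_2$ by deleting the sinks of $G_1$, the sources of $G_2$ and the edges $o_k,i_k$, and adding for each $k$ a new edge $\overline{e_k}$ from the initial vertex of $o_k$ to the terminal vertex of $i_k$. With $Q_1=\{e\in E(G_1): e\prec_1 o_1\}$, $Q_k=\{e: o_{k-1}\prec_1 e\prec_1 o_k\}$, $P_k=\{e\in E(G_2):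 i_k\prec_2 e\prec_2 i_{k+1}\}$ ($k<n$), $P_n=\{e: i_n\prec_2 e\}$, the order $\prec_2\circ\prec_1$ lists $Q_1,\{\overline{e_1}\},P_1,\dots,Q_n,\{\overline{e_n}\},P_n$ consecutively, each $Q_k$ ordered by $\prec_1$, each $P_k$ by $\prec_2$; $(G_2,\prec_2)\circ(G_1,\prec_1):=(G_2\circ G_1,\prec_2\circ\prec_1)$. *)

(* Defs.v *)
From HB Require Import structures.
From mathcomp Require Import all_boot.

Set Implicit Arguments.
Unset Strict Implicit.
Unset Printing Implicit Defensive.

(* The vertex set
   is a finite type; the edges are the positions of the list [edges G]
   (parallel edges = repeated pairs at different positions); the edge at
   position k goes from [(edges G)`_k.1] to [(edges G)`_k.2]; the linear order
   on edges is the order of positions in the list. *)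
Record pgraph := PGraph { vtx : finType; edges : seq (vtx * vtx) }.

Section Basic.
Variable G : pgraph.
Local Notation V := (vtx G).
Local Notation E := (edges G).

Definition indeg (v : V) := count (fun e : V * V => e.2 == v) E.
Definition outdeg (v : V) := count (fun e : V * V => e.1 == v) E.
Definition deg (v : V) := indeg v + outdeg v.
Definition is_source (v : V) := indeg v == 0.
Definition is_sink (v : V) := outdeg v == 0.
Definition boundary (v : V) := deg v == 1.
Definition internal (v : V) := ~~ boundary v.

Definition adj : rel V := fun u w => (u, w) \in E.
Definition uadj : rel V := fun u w => adj u w || adj w u.

Definition acyclic : Prop := forall e, e \in E -> ~~ connect adj e.2 e.1.

Definition progressive : Prop :=
  acyclic /\ forall v : V, (is_source v -> deg v = 1) /\ (is_sink v -> deg v = 1).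

Definition elementary : Prop :=
  forall u v : V, internal u -> internal v -> connect uadj u v -> u = v.

Definition is_input (e : V * V) := boundary e.1.
Definition is_output (e : V * V) := boundary e.2.

Definition Eidx := 'I_(size E).
Definition edge (i : Eidx) : V * V := tnth (in_tuple E) i.

Definition arrow (i j : Eidx) : bool :=
  (i != j) && connect adj (edge i).2 (edge j).1.

Definition planar : Prop :=
  (forall i j : Eidx, arrow i j -> i < j) /\
  (forall i j k : Eidx, i < j -> j < k -> arrow i k -> arrow i j || arrow j k).

Definition is_pop : Prop := progressive /\ planar.
Definition elementary_pop : Prop := is_pop /\ elementary.

End Basic.

(* isomorphism of POP-graphs: a vertex bijection carrying the edge at each
   position to the edge at the same position (an order-preserving bijection of
   finite linearly ordered edge sets is forced to preserve positions). *)
Definition pop_iso (G H : pgraph) : Prop :=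
  exists f : vtx G -> vtx H, bijective f /\
    map (fun e => (f e.1, f e.2)) (edges G) = edges H.

Fixpoint split_r (T : Type) (p : pred T) (s : seq T) : seq T * seq (T * seq T) :=
  match s with
  | [::] => ([::], [::])
  | x :: s' => let: (h, cs) := split_r p s' in
               if p x then ([::], (x, h) :: cs) else (x :: h, cs)
  end.
(* s = h ++ x1 :: P1 ++ ... ++ xn :: Pn  ~~>  [:: (x1,P1); ...; (xn,Pn)] *)
Definition chunks_after (T : Type) (p : pred T) (s : seq T) := (split_r p s).2.
(* s = Q1 ++ x1 :: ... ++ Qn ++ xn :: t  ~~>  [:: (Q1,x1); ...; (Qn,xn)] *)
Definition chunks_before (T : Type) (p : pred T) (s : seq T) :=
  map (fun c : T * seq T => (rev c.2, c.1)) (rev (split_r p (rev s)).2).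

Definition composable (G1 G2 : pgraph) : Prop :=
  count (is_output (G:=G1)) (edges G1) = count (is_input (G:=G2)) (edges G2).

Section Comp.
Variables G2 G1 : pgraph.
Local Notation V1 := (vtx G1).
Local Notation V2 := (vtx G2).
Definition keep (x : (V1 + V2)%type) : bool :=
  match x with inl v => ~~ is_sink v | inr v => ~~ is_source v end.
Definition cvtx := {x : (V1 + V2)%type | keep x}.

Definition raw_edges : seq ((V1 + V2) * (V1 + V2))%type :=
  flatten [seq map (fun e : V1 * V1 => (inl e.1, inl e.2)) c.1.1
            ++ [:: (inl c.1.2.1, inr c.2.1.2)]
            ++ map (fun e : V2 * V2 => (inr e.1, inr e.2)) c.2.2
          | c <- zip (chunks_before (is_output (G:=G1)) (edges G1))
                     (chunks_after (is_input (G:=G2)) (edges G2))].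

Definition restrict_edge (e : ((V1 + V2) * (V1 + V2))%type) : option (cvtx * cvtx) :=
  match insub e.1, insub e.2 with
  | Some a, Some b => Some (a, b)
  | _, _ => None
  end.

(* G2 o G1 *)
Definition pop_comp : pgraph := @PGraph (cvtx : finType) (pmap restrict_edge raw_edges).
End Comp.

(* acc = G_k o ... o G_1; the remaining factors G_{k+1},...,G_n *)
Fixpoint decomp_chain (acc : pgraph) (gs : seq pgraph) : Prop :=
  match gs with
  | [::] => True
  | g :: gs' => elementary_pop g /\ composable acc g /\ decomp_chain (pop_comp g acc) gs'
  end.

(* Main.v *)
Require Import Defs.
From mathcomp Require Import all_boot zify.
Set Implicit Arguments. Unset Strict Implicit. Unset Printing Implicit Defensive.

Definition emap (T U : Type) (f : T -> U) (e : T * T) := (f e.1, f e.2).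

Definition emb (X Y : pgraph) (f : vtx X -> vtx Y) :=
  injective f /\ map (emap f) (edges X) = edges Y.

Lemma connect_hom (T U : finType) (e : rel T) (e' : rel U) (h : T -> U) :
  (forall x y, e x y -> e' (h x) (h y)) ->
  forall x y, connect e x y -> connect e' (h x) (h y).
Proof.
move=> he x y /connectP [p]; elim: p x => [|z p IH] x /= ; first by move=> _ ->.
case/andP=> exz pz yl. exact: connect_trans (connect1 (he _ _ exz)) (IH _ pz yl).
Qed.

Lemma connect_lift (T U : finType) (e : rel T) (e' : rel U) (h : T -> U) :
  injective h ->
  (forall x z, e' (h x) z -> exists y, z = h y /\ e x y) ->
  forall x y, connect e' (h x) (h y) -> connect e x y.
Proof.
move=> hi he x y /connectP [p]; elim: p x => [|z p IH] x /=; first by move=> _ /hi ->.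
case/andP=> exz pz yl. case: (he _ _ exz) => w [ez ew]. subst z.
exact: connect_trans (connect1 ew) (IH _ pz yl).
Qed.

Fixpoint triplewise (T : Type) (r : T -> T -> T -> bool) (s : seq T) : bool :=
  if s is x :: s' then pairwise (r x) s' && triplewise r s' else true.

Lemma triplewise_map (T U : Type) (h : T -> U) r s :
  triplewise r (map h s) = triplewise (fun x y z => r (h x) (h y) (h z)) s.
Proof. elim: s => //= x s ->. by rewrite pairwise_map. Qed.

Lemma triplewiseP (T : Type) (r : T -> T -> T -> bool) (x0 : T) s :
  reflect (forall i j k, i < j -> j < k -> k < size s ->
             r (nth x0 s i) (nth x0 s j) (nth x0 s k)) (triplewise r s).
Proof.
elim: s => [|x s IH] /=; first by constructor=> i j k _ _.
apply: (iffP andP).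
- case=> /(pairwiseP x0) P1 /IH P2 i j k.
  case: j => [|j] //; case: k => [|k] //; rewrite !ltnS /=.
  case: i => [|i] /= ij jk ks.
  + by apply: P1; rewrite /= ?inE // ; apply: ltn_trans jk ks.
  + exact: P2.
- move=> Hr; split.
  + apply/(pairwiseP x0) => j k jl kl jk. exact: (Hr 0 j.+1 k.+1).
  + apply/IH => i j k ij jk ks. exact: (Hr i.+1 j.+1 k.+1).
Qed.

Section Emb.
Variables (X Y : pgraph) (f : vtx X -> vtx Y).
Hypothesis H : emb f.

Lemma emb_inj : injective f. Proof. by case: H. Qed.
Lemma emb_edges : map (emap f) (edges X) = edges Y. Proof. by case: H. Qed.

Lemma emap_inj : injective (emap f).
Proof. move=> [a b] [c d] /= [/emb_inj -> /emb_inj ->]. by []. Qed.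

Lemma indeg_emb x : indeg (f x) = indeg x.
Proof. rewrite /indeg -emb_edges count_map. apply: eq_count => e /=. by rewrite (inj_eq emb_inj). Qed.
Lemma outdeg_emb x : outdeg (f x) = outdeg x.
Proof. rewrite /outdeg -emb_edges count_map. apply: eq_count => e /=. by rewrite (inj_eq emb_inj). Qed.
Lemma deg_emb x : deg (f x) = deg x.
Proof. by rewrite /deg indeg_emb outdeg_emb. Qed.
Lemma boundary_emb x : boundary (f x) = boundary x.
Proof. by rewrite /boundary deg_emb. Qed.
Lemma internal_emb x : internal (f x) = internal x.
Proof. by rewrite /internal boundary_emb. Qed.
Lemma is_source_emb x : is_source (f x) = is_source x.
Proof. by rewrite /is_source indeg_emb. Qed.
Lemma is_sink_emb x : is_sink (f x) = is_sink x.
Proof. by rewrite /is_sink outdeg_emb. Qed.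

Lemma adj_emb x y : adj (f x) (f y) = adj x y.
Proof. by rewrite /adj -emb_edges -[(f x, f y)]/(emap f (x, y)) (mem_map emap_inj). Qed.

Lemma adj_emb_lift x z : adj (f x) z -> exists y, z = f y /\ adj x y.
Proof.
rewrite /adj -emb_edges => /mapP [[a b] ab] /= [/emb_inj ex ez]. subst.
by exists b.
Qed.

Lemma connect_emb x y : connect (@adj Y) (f x) (f y) = connect (@adj X) x y.
Proof.
apply/idP/idP.
- apply: connect_lift; [exact: emb_inj | exact: adj_emb_lift].
- apply: connect_hom => a b; by rewrite adj_emb.
Qed.

Lemma uadj_emb x y : uadj (f x) (f y) = uadj x y.
Proof. by rewrite /uadj !adj_emb. Qed.

Lemma uconnect_emb x y : connect (@uadj Y) (f x) (f y) = connect (@uadj X) x y.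
Proof.
apply/idP/idP.
- apply: connect_lift; first exact: emb_inj.
  move=> a z /orP [] Ha.
  + by case: (adj_emb_lift Ha) => b [-> ab]; exists b; rewrite /uadj ab.
  + move: Ha; rewrite /adj -emb_edges => /mapP [[c d] cd] /= [ez /emb_inj ed]. subst.
    by exists c; rewrite /uadj /adj cd orbT.
- apply: connect_hom => a b; by rewrite uadj_emb.
Qed.

Lemma acyclic_emb : acyclic Y <-> acyclic X.
Proof.
split => Ha e He.
- have := Ha (emap f e). rewrite -emb_edges (mem_map emap_inj) => /(_ He).
  by rewrite /= connect_emb.
- move: He; rewrite -emb_edges => /mapP [e' He' ->] /=. rewrite connect_emb. exact: Ha.
Qed.

Lemma count_output_emb : count (@is_output Y) (edges Y) = count (@is_output X) (edges X).
Proof. rewrite -emb_edges count_map. apply: eq_count => e. by rewrite /= /is_output boundary_emb. Qed.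
Lemma count_input_emb : count (@is_input Y) (edges Y) = count (@is_input X) (edges X).
Proof. rewrite -emb_edges count_map. apply: eq_count => e. by rewrite /= /is_input boundary_emb. Qed.

Lemma progressive_emb : progressive X <->
  acyclic Y /\ forall x, (is_source (f x) -> deg (f x) = 1) /\ (is_sink (f x) -> deg (f x) = 1).
Proof.
rewrite /progressive. split; case=> a h; split.
- by apply/acyclic_emb.
- by move=> x; rewrite is_source_emb is_sink_emb deg_emb.
- by apply/acyclic_emb.
- by move=> x; have := h x; rewrite is_source_emb is_sink_emb deg_emb.
Qed.

Lemma elementary_emb : elementary X <->
  forall x y, internal (f x) -> internal (f y) -> connect (@uadj Y) (f x) (f y) -> x = y.
Proof.
split => h x y.
- rewrite !internal_emb uconnect_emb; exact: h.
- move=> ix iy c; apply: h; by rewrite ?internal_emb ?uconnect_emb.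
Qed.

End Emb.

Definition Rg (G : pgraph) (e1 e2 : vtx G * vtx G) := connect (@adj G) e1.2 e2.1.
Definition planar_l (G : pgraph) :=
  pairwise (fun x y => ~~ Rg y x) (edges G) &&
  triplewise (fun x y z => Rg x z ==> Rg x y || Rg y z) (edges G).

Lemma edgeE (G : pgraph) (i : Eidx G) d : edge i = nth d (edges G) i.
Proof. by rewrite /edge (tnth_nth d). Qed.

Lemma Rg_irr (G : pgraph) e : acyclic G -> e \in edges G -> Rg e e = false.
Proof. move=> Ha He; apply/negbTE; exact: Ha. Qed.

Lemma planarP (G : pgraph) : acyclic G -> planar G <-> planar_l G.
Proof.
move=> Ha; split.
- case=> P1 P2. case Ee: (edges G) => [|x0 s]; first by rewrite /planar_l Ee.
  apply/andP; split.
  + apply/(pairwiseP x0) => i j; rewrite !inE => il jl ij.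
    apply/negP => R.
    have := P1 (Ordinal jl) (Ordinal il). rewrite /arrow /= !(edgeE _ x0) /=.
    move: R; rewrite /Rg => R.
    rewrite R andbT -(inj_eq val_inj) /= neq_ltn ij orbT => /(_ isT).
    by rewrite ltnNge ltnW.
  + apply/(triplewiseP _ x0) => i j k ij jk ks.
    have jl := ltn_trans jk ks; have il := ltn_trans ij jl.
    apply/implyP => R. move: R; rewrite /Rg => R.
    have := P2 (Ordinal il) (Ordinal jl) (Ordinal ks) ij jk.
    rewrite /arrow /= !(edgeE _ x0) /= R andbT -(inj_eq val_inj) /= neq_ltn (ltn_trans ij jk) /=.
    by move=> /(_ isT) /orP [/andP[_ ->]|/andP[_ ->]] //; rewrite /Rg ?orbT.
- case/andP=> pw tw; split.
  + move=> i j /andP [ij R]. case: (ltngtP i j) => // ji; last first.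
      by move/val_inj: ji => e; rewrite e eqxx in ij.
    move/(pairwiseP (edge i)): pw => /(_ j i (ltn_ord j) (ltn_ord i) ji).
    by rewrite -!(edgeE _ (edge i)) /Rg R.
  + move=> i j k ij jk /andP [_ R].
    move/(triplewiseP _ (edge i)): tw => /(_ i j k ij jk (ltn_ord k)).
    rewrite -!(edgeE _ (edge i)) /Rg R /= /arrow.
    by rewrite -!(inj_eq val_inj) /= (ltn_eqF ij) (ltn_eqF jk).
Qed.

Lemma eq_triplewise (T : Type) (r r' : T -> T -> T -> bool) s :
  (forall x y z, r x y z = r' x y z) -> triplewise r s = triplewise r' s.
Proof.
move=> h; elim: s => //= x s ->. congr andb. by apply: eq_pairwise => a b.
Qed.

Section Emb2.
Variables (X Y : pgraph) (f : vtx X -> vtx Y).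
Hypothesis H : emb f.

Lemma Rg_emb a b : Rg (emap f a) (emap f b) = Rg a b.
Proof. by rewrite /Rg /= (connect_emb H). Qed.

Lemma planar_l_emb : planar_l Y = planar_l X.
Proof.
rewrite /planar_l -(emb_edges H) pairwise_map triplewise_map.
congr andb; [apply: eq_pairwise => a b /= | apply: eq_triplewise => a b c /=];
  by rewrite ?Rg_emb.
Qed.

Lemma planar_emb : acyclic X -> (planar Y <-> planar X).
Proof.
move=> Ha. have Hb : acyclic Y by apply/(acyclic_emb H).
split => P.
- apply/planarP => //; rewrite -planar_l_emb; exact/planarP.
- apply/planarP => //; rewrite planar_l_emb; exact/planarP.
Qed.

Lemma is_pop_emb : is_pop X <->
  acyclic Y /\ planar Y /\ forall x, (is_source (f x) -> deg (f x) = 1) /\ (is_sink (f x) -> deg (f x) = 1).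
Proof.
split.
- case=> /(progressive_emb H) [a h] p. split=> //; split=> //.
  apply/planar_emb => //; exact/(acyclic_emb H).
- case=> a [p h]. have aX : acyclic X by apply/(acyclic_emb H).
  split; first exact/(progressive_emb H).
  exact/(planar_emb aX).
Qed.
End Emb2.

Lemma emb_comp (X Y Z : pgraph) (f : vtx X -> vtx Y) (g : vtx Y -> vtx Z) :
  emb f -> emb g -> emb (g \o f).
Proof.
case=> fi fe [gi ge]; split; first exact: inj_comp.
by rewrite -ge -fe -map_comp.
Qed.

Lemma emb_iso (X Y : pgraph) (f : vtx X -> vtx Y) :
  emb f -> (forall y, exists x, y = f x) -> pop_iso X Y.
Proof.
case=> fi fe sur. exists f; split => //.
have cod : forall y, y \in codom f.
  move=> y; case: (sur y) => x ->; exact: codom_f.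
exists (fun y => iinv (cod y)) => [x|y]; first by apply: fi; rewrite f_iinv.
by rewrite f_iinv.
Qed.

Lemma iso_emb (X Y : pgraph) : pop_iso X Y -> exists f : vtx X -> vtx Y, emb f.
Proof. case=> f [fb fe]; exists f; split => //; exact: bij_inj. Qed.

Lemma split_r_nop (T : Type) (p : pred T) s t : all (predC p) s ->
  split_r p (s ++ t) = (s ++ (split_r p t).1, (split_r p t).2).
Proof.
elim: s => [|x s IH] /=; first by case: (split_r p t).
case/andP=> /negbTE px /IH ->. by rewrite px.
Qed.

Lemma split_r_blocks (T : Type) (p : pred T) (cs : seq (T * seq T)) :
  all (fun c => p c.1 && all (predC p) c.2) cs ->
  split_r p (flatten [seq c.1 :: c.2 | c <- cs]) = ([::], cs).
Proof.
elim: cs => [|[x P] cs IH] //= /andP [/andP [px hP] /IH IH'].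
by rewrite (split_r_nop _ hP) IH' /= px cats0.
Qed.

Lemma chunks_after_blocks (T : Type) (p : pred T) (cs : seq (T * seq T)) :
  all (fun c => p c.1 && all (predC p) c.2) cs ->
  chunks_after p (flatten [seq c.1 :: c.2 | c <- cs]) = cs.
Proof. by move=> h; rewrite /chunks_after split_r_blocks. Qed.

Lemma chunks_before_blocks (T : Type) (p : pred T) (cs : seq (seq T * T)) :
  all (fun c => all (predC p) c.1 && p c.2) cs ->
  chunks_before p (flatten [seq rcons c.1 c.2 | c <- cs]) = cs.
Proof.
move=> h. rewrite /chunks_before.
have -> : rev (flatten [seq rcons c.1 c.2 | c <- cs]) =
    flatten [seq c.1 :: c.2 | c <- [seq (c.2, rev c.1) | c <- rev cs]].
  elim: cs {h} => //= c cs IH.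
  rewrite rev_cat IH rev_cons -!cats1 !map_cat flatten_cat /= cats0 rev_cat /=. by [].
rewrite split_r_blocks; last first.
  rewrite all_map all_rev; apply: sub_all h => c /= /andP [a b]. by rewrite b all_rev.
rewrite /= -map_rev revK -map_comp /=. rewrite -[RHS]map_id. apply: eq_map => -[q o] /=.
by rewrite revK.
Qed.

Section Comp.
Variables (G2 G1 : pgraph).
Local Notation V1 := (vtx G1).
Local Notation V2 := (vtx G2).
Definition block := ((seq (V1*V1) * (V1*V1)) * ((V2*V2) * seq (V2*V2)))%type.

Lemma raw_edges_blocks (bs : seq block) :
  edges G1 = flatten [seq rcons b.1.1 b.1.2 | b <- bs] ->
  edges G2 = flatten [seq b.2.1 :: b.2.2 | b <- bs] ->
  all (fun b => all (predC (@is_output G1)) b.1.1 && is_output b.1.2) bs ->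
  all (fun b => is_input b.2.1 && all (predC (@is_input G2)) b.2.2) bs ->
  raw_edges G2 G1 = flatten [seq map (fun e : V1*V1 => (inl e.1, inl e.2)) b.1.1
            ++ [:: (inl b.1.2.1, inr b.2.1.2)]
            ++ map (fun e : V2*V2 => (inr e.1, inr e.2)) b.2.2 | b <- bs].
Proof.
move=> e1 e2 h1 h2. rewrite /raw_edges e1 e2.
have -> : [seq rcons b.1.1 b.1.2 | b <- bs] = [seq rcons c.1 c.2 | c <- map fst bs] by rewrite -map_comp.
have -> : [seq b.2.1 :: b.2.2 | b <- bs] = [seq c.1 :: c.2 | c <- map snd bs] by rewrite -map_comp.
rewrite chunks_before_blocks ?all_map // chunks_after_blocks ?all_map //.
have -> : zip (map fst bs) (map snd bs) = bs by elim: bs {e1 e2 h1 h2} => //= -[a b] bs ->.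
by [].
Qed.
End Comp.

Inductive kind (A B : Type) := KOne of A | KMid of A & B | KTwo of B.
Arguments KOne {A B}. Arguments KMid {A B}. Arguments KTwo {A B}.

Section Kinds.
Variables (A B : Type).
Definition k1 (k : kind A B) := match k with KOne e => Some e | KMid o _ => Some o | KTwo _ => None end.
Definition k2 (k : kind A B) := match k with KOne _ => None | KMid _ i => Some i | KTwo e => Some e end.
Definition isTwo (k : kind A B) := if k is KTwo _ then true else false.
Definition isOne (k : kind A B) := if k is KOne _ then true else false.

Fixpoint blk (ks : seq (kind A B)) : seq B * seq ((seq A * A) * (B * seq B)) :=
  match ks with
  | [::] => ([::], [::])
  | KTwo e :: r => let: (ts, bs) := blk r in (e :: ts, bs)
  | KMid o i :: r => let: (ts, bs) := blk r in ([::], (([::], o), (i, ts)) :: bs)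
  | KOne e :: r => let: (ts, bs) := blk r in
      ([::], if bs is b :: bs' then ((e :: b.1.1, b.1.2), b.2) :: bs' else [::])
  end.

Fixpoint wsh (ks : seq (kind A B)) : bool :=
  match ks with
  | [::] => true
  | KOne _ :: r => (if r is y :: _ then ~~ isTwo y else false) && wsh r
  | _ :: r => wsh r
  end.

Definition hdnt (ks : seq (kind A B)) := if ks is k :: _ then ~~ isTwo k else true.

Lemma blk1 ks : hdnt ks -> (blk ks).1 = [::].
Proof. by case: ks => [|[e|o i|e] r] //= _; case: (blk r). Qed.

Lemma blk_one e r : blk (KOne e :: r) = let: (ts, bs) := blk r in
      ([::], if bs is b :: bs' then ((e :: b.1.1, b.1.2), b.2) :: bs' else [::]).
Proof. by []. Qed.
Lemma blk_mid o i r : blk (KMid o i :: r) = let: (ts, bs) := blk r in ([::], (([::], o), (i, ts)) :: bs).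
Proof. by []. Qed.
Lemma blk_two e r : blk (KTwo e :: r) = let: (ts, bs) := blk r in (e :: ts, bs).
Proof. by []. Qed.

Lemma blk_ne k r : wsh (k :: r) -> ~~ isTwo k -> ~~ nilp (blk (k :: r)).2.
Proof.
elim: r k => [|y r IH] [e|o i|e] //.
- rewrite [wsh _]/= blk_one => /andP [ny wr] _. have := IH y wr ny.
  by case: (blk (y :: r)) => ts [|b bs].
- by rewrite blk_mid; case: (blk _).
Qed.

Variables (C : Type) (m1 : A -> C) (mm : A -> B -> C) (m2 : B -> C).
Definition kmerge (k : kind A B) := match k with KOne e => m1 e | KMid o i => mm o i | KTwo e => m2 e end.

Lemma blk_spec ks : wsh ks ->
  [/\ pmap k1 ks = flatten [seq rcons b.1.1 b.1.2 | b <- (blk ks).2],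
      pmap k2 ks = (blk ks).1 ++ flatten [seq b.2.1 :: b.2.2 | b <- (blk ks).2] &
      map kmerge ks = map m2 (blk ks).1 ++
        flatten [seq map m1 b.1.1 ++ [:: mm b.1.2 b.2.1] ++ map m2 b.2.2 | b <- (blk ks).2]].
Proof.
elim: ks => [|k r IH] //; case: k => [e|o i|e].
- rewrite [wsh _]/= => /andP [hy wr]. have [IH1 IH2 IH3] := IH wr.
  have ne : ~~ nilp (blk r).2.
    by case: r hy wr {IH IH1 IH2 IH3} => // y r' hy wr; apply: blk_ne.
  have b1 : (blk r).1 = [::] by apply: blk1; case: r hy {IH IH1 IH2 IH3 ne wr}.
  rewrite blk_one /=. move: IH1 IH2 IH3 ne b1. case: (blk r) => ts [|b bs] //= -> -> -> _ -> /=.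
  by split.
- rewrite [wsh _]/= => wr; have [IH1 IH2 IH3] := IH wr. rewrite blk_mid /=. move: IH1 IH2 IH3.
  case: (blk r) => ts bs /= -> -> ->. by split.
- rewrite [wsh _]/= => wr; have [IH1 IH2 IH3] := IH wr. rewrite blk_two /=. move: IH1 IH2 IH3.
  case: (blk r) => ts bs /= -> -> ->. by split.
Qed.

Variables (P1 Q1 : pred A) (P2 Q2 : pred B).
Definition kp (k : kind A B) := match k with KOne e => P1 e | KMid o i => Q1 o && Q2 i | KTwo e => P2 e end.

Lemma blk_all ks : all kp ks ->
  all P2 (blk ks).1 &&
  all (fun b => all P1 b.1.1 && Q1 b.1.2 && Q2 b.2.1 && all P2 b.2.2) (blk ks).2.
Proof.
elim: ks => [|k r IH] //; case: k => [e|o i|e] /andP [hk /IH];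
  rewrite ?blk_one ?blk_mid ?blk_two; case: (blk r) => ts bs /=.
- case/andP=> _. case: bs => //= b bs /andP [/andP [/andP [/andP [-> ->] ->] ->] ->].
  by move: hk => /= ->.
- by case/andP=> -> ->; move: hk => /= /andP [-> ->].
- by case/andP=> -> ->; move: hk => /= ->.
Qed.
End Kinds.
Arguments k1 {A B}. Arguments k2 {A B}. Arguments isTwo {A B}. Arguments isOne {A B}.
Arguments blk {A B}. Arguments wsh {A B}. Arguments hdnt {A B}. Arguments kmerge {A B C}.
Arguments kp {A B}.

Lemma split_r_eq (T : Type) (p q : pred T) s : p =1 q -> split_r p s = split_r q s.
Proof. move=> e; elim: s => //= x s ->; by rewrite e. Qed.

Lemma chunks_before_eq (T : Type) (p q : pred T) s : p =1 q -> chunks_before p s = chunks_before q s.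
Proof. by move=> e; rewrite /chunks_before (split_r_eq _ e). Qed.
Lemma chunks_after_eq (T : Type) (p q : pred T) s : p =1 q -> chunks_after p s = chunks_after q s.
Proof. by move=> e; rewrite /chunks_after (split_r_eq _ e). Qed.

Lemma split_r_map (T U : Type) (p : pred U) (h : T -> U) s :
  split_r p (map h s) = (map h (split_r (fun x => p (h x)) s).1,
                         map (fun c => (h c.1, map h c.2)) (split_r (fun x => p (h x)) s).2).
Proof.
elim: s => //= x s ->. case: (split_r _ s) => a b /=. by case: (p (h x)).
Qed.

Lemma chunks_after_map (T U : Type) (p : pred U) (h : T -> U) s :
  chunks_after p (map h s) = map (fun c => (h c.1, map h c.2)) (chunks_after (fun x => p (h x)) s).
Proof. by rewrite /chunks_after split_r_map. Qed.

Lemma chunks_before_map (T U : Type) (p : pred U) (h : T -> U) s :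
  chunks_before p (map h s) = map (fun c => (map h c.1, h c.2)) (chunks_before (fun x => p (h x)) s).
Proof.
rewrite /chunks_before -map_rev split_r_map /= -map_rev -!map_comp.
apply: eq_map => c /=. by rewrite map_rev.
Qed.

Lemma pmap_map (T U W : Type) (g : U -> option W) (h : T -> U) s :
  pmap g (map h s) = pmap (fun x => g (h x)) s.
Proof. by elim: s => //= x s ->. Qed.

Lemma pmap_omap (T U W : Type) (r : T -> option U) (F : U -> W) s :
  pmap (fun x => omap F (r x)) s = map F (pmap r s).
Proof. elim: s => //= x s ->. by case: (r x). Qed.

Section CompEmb.
Variables (X1 Y1 X2 Y2 : pgraph) (f1 : vtx X1 -> vtx Y1) (f2 : vtx X2 -> vtx Y2).
Hypotheses (H1 : emb f1) (H2 : emb f2).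

Definition smap (x : (vtx X1 + vtx X2)%type) : (vtx Y1 + vtx Y2)%type :=
  match x with inl a => inl (f1 a) | inr b => inr (f2 b) end.

Lemma keep_smap x : @keep Y2 Y1 (smap x) = @keep X2 X1 x.
Proof. by case: x => a /=; rewrite ?(is_sink_emb H1) ?(is_source_emb H2). Qed.

Definition cF (x : cvtx X2 X1) : cvtx Y2 Y1 :=
  exist _ (smap (sval x)) (etrans (keep_smap (sval x)) (svalP x)).

Lemma smap_inj : injective smap.
Proof.
move=> [a|a] [b|b] //= [e]; congr (_ _); [exact: (emb_inj H1) | exact: (emb_inj H2)].
Qed.

Lemma cF_inj : injective cF.
Proof. move=> x y [/smap_inj e]. exact: val_inj. Qed.

Lemma insub_smap x : insub (smap x) = omap cF (insub x) :> option (cvtx Y2 Y1).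
Proof.
case: (insubP (cvtx X2 X1) x) => [u ku ux|nk].
- case: (insubP (cvtx Y2 Y1) (smap x)) => [w kw wx|nk]; last by rewrite keep_smap ku in nk.
  congr Some; apply: val_inj => /=. by rewrite wx ux.
- case: (insubP (cvtx Y2 Y1) (smap x)) => [w kw wx|nk2] //.
  by rewrite keep_smap in kw; rewrite kw in nk.
Qed.

Lemma raw_edges_emb : raw_edges Y2 Y1 = map (emap smap) (raw_edges X2 X1).
Proof.
rewrite /raw_edges -(emb_edges H1) -(emb_edges H2).
rewrite chunks_before_map chunks_after_map.
rewrite (@chunks_before_eq _ _ (@is_output X1)); last first.
  by move=> e; rewrite /is_output /= (boundary_emb H1).
rewrite (@chunks_after_eq _ _ (@is_input X2)); last first.
  by move=> e; rewrite /is_input /= (boundary_emb H2).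
elim: (chunks_before _ _) (chunks_after _ _) => [|c cs IH] [|d ds] //=.
rewrite IH map_cat. congr (_ ++ _). rewrite !map_cat /= -!map_comp. by congr (_ ++ _ :: _); apply: eq_map.
Qed.

Lemma comp_emb : @emb (pop_comp X2 X1) (pop_comp Y2 Y1) cF.
Proof.
split; first exact: cF_inj.
rewrite /= raw_edges_emb pmap_map /restrict_edge.
rewrite -pmap_omap. apply: eq_pmap => e /=. rewrite !insub_smap.
by case: (insub e.1) => [a|]; case: (insub e.2) => [b|].
Qed.
End CompEmb.

Lemma decomp_chain_rcons acc gs g :
  decomp_chain acc gs -> elementary_pop g ->
  composable (foldl (fun acc g => pop_comp g acc) acc gs) g ->
  decomp_chain acc (rcons gs g).
Proof.
elim: gs acc => [|h gs IH] acc /=; first by move=> _ a b.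
case=> a [b c] d e. split=> //; split=> //. exact: IH.
Qed.

Definition ends (T : Type) (es : seq (T * T)) := flatten [seq [:: e.1; e.2] | e <- es].
Definition mkV (T : finType) (es : seq (T * T)) := {x : T | x \in ends es}.
Definition rst (T : finType) (es : seq (T * T)) (e : T * T) : option (mkV es * mkV es) :=
  match insub e.1, insub e.2 with Some a, Some b => Some (a, b) | _, _ => None end.
Definition mkG (T : finType) (es : seq (T * T)) : pgraph := @PGraph (mkV es : finType) (pmap (rst es) es).
Definition raw (T : finType) (es : seq (T * T)) : pgraph := @PGraph T es.

Lemma ends_mem (T : finType) (es : seq (T * T)) e : e \in es -> (e.1 \in ends es) && (e.2 \in ends es).
Proof.
move=> he; apply/andP; split; apply/flatten_mapP; exists e => //; by rewrite !inE eqxx ?orbT.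
Qed.

Lemma endsP (T : finType) (es : seq (T * T)) x : x \in ends es -> exists2 e, e \in es & (e.1 = x \/ e.2 = x).
Proof.
case/flatten_mapP => e he; rewrite !inE => /orP [] /eqP ->; exists e => //; by [left|right].
Qed.

Lemma emb_mkG (T : finType) (es : seq (T * T)) : @emb (mkG es) (raw es) val.
Proof.
split; first exact: val_inj.
rewrite /=. have : all (fun e => (e.1 \in ends es) && (e.2 \in ends es)) es.
  by apply/allP => e; apply: ends_mem.
have gen : forall s, all (fun e => (e.1 \in ends es) && (e.2 \in ends es)) s ->
   map (emap val) (pmap (rst es) s) = s.
  elim => //= e s IH /andP [/andP [h1 h2] /IH].
  rewrite /rst (insubT (fun x => x \in ends es) h1) (insubT (fun x => x \in ends es) h2) /= => ->. by case: e h1 h2.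
exact: gen.
Qed.

Section GFacts.
Variable G : pgraph.
Local Notation V := (vtx G).
Local Notation E := (edges G).
Local Notation N := (size (edges G)).
Variables (d : V * V) (a : nat).
Definition ed i := nth d E i.
Local Notation v := (ed a).2.

Hypotheses (Hacyc : acyclic G)
  (Hprog : forall u : V, (is_source u -> deg u = 1) /\ (is_sink u -> deg u = 1))
  (HP1 : forall i j, i < j -> j < N -> ~~ Rg (ed j) (ed i))
  (HP2 : forall i j k, i < j -> j < k -> k < N -> Rg (ed i) (ed k) -> Rg (ed i) (ed j) || Rg (ed j) (ed k))
  (Ha : a < N) (Hint : internal v)
  (Hmax : forall i, i < N -> internal (ed i).2 -> i <= a).

Lemma Eiota : E = map ed (iota 0 N).
Proof. by rewrite /ed -{1}(mkseq_nth d E). Qed.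

Lemma mem_ed i : i < N -> ed i \in E.
Proof. exact: mem_nth. Qed.

Lemma adj_ed i : i < N -> adj (ed i).1 (ed i).2.
Proof. by move=> h; rewrite /adj -surjective_pairing mem_ed. Qed.

Lemma adj_idx x y : adj x y -> exists2 i, i < N & ed i = (x, y).
Proof. by move/(nthP d). Qed.

Lemma outdeg_pos i u : i < N -> (ed i).1 = u -> 0 < outdeg u.
Proof.
move=> h e; rewrite /outdeg -has_count; apply/hasP; exists (ed i); by [apply: mem_ed | apply/eqP].
Qed.

Lemma indeg_pos i u : i < N -> (ed i).2 = u -> 0 < indeg u.
Proof.
move=> h e; rewrite /indeg -has_count; apply/hasP; exists (ed i); by [apply: mem_ed | apply/eqP].
Qed.

Lemma sink_noadj (u z : V) : is_sink u -> ~~ adj u z.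
Proof.
move=> /eqP s; apply/negP => /adj_idx [i hi ei].
by have := outdeg_pos hi (f_equal fst ei); rewrite s.
Qed.

Lemma sink_connect (u w : V) : is_sink u -> connect (@adj G) u w -> w = u.
Proof.
move=> s /connectP [[|z p] /=]; first by move=> _ ->.
by case/andP=> h; rewrite (negbTE (sink_noadj z s)) in h.
Qed.

Lemma internal_not_sink (u : V) : internal u -> ~~ is_sink u.
Proof. move=> iu; apply/negP => s. have := (Hprog u).2 s. by move: iu; rewrite /internal /boundary => /negP + /eqP. Qed.

Lemma internal_not_source (u : V) : internal u -> ~~ is_source u.
Proof. move=> iu; apply/negP => s. have := (Hprog u).1 s. by move: iu; rewrite /internal /boundary => /negP + /eqP. Qed.

Lemma bnd_sink (u : V) : boundary u -> 0 < indeg u -> is_sink u.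
Proof. rewrite /boundary /deg /is_sink => /eqP h p. apply/eqP. lia. Qed.

Lemma head_internal_or_sink i : i < N -> internal (ed i).2 \/ is_sink (ed i).2.
Proof.
move=> h; case bi: (boundary (ed i).2); [right | left; by rewrite /internal bi].
apply: bnd_sink => //; exact: indeg_pos h _.
Qed.

Lemma two_facts i : i < N -> (ed i).1 = v -> a < i /\ is_sink (ed i).2.
Proof.
move=> hi e1.
have ai : a < i.
  case: (ltngtP a i) => // [ia|ai].
  - have := HP1 ia Ha. by rewrite /Rg e1 connect0.
  - subst i. have := Hacyc (mem_ed Ha). by rewrite e1 connect0.
split=> //. case: (head_internal_or_sink hi) => // /(Hmax hi). by rewrite leqNgt ai.
Qed.

Lemma v_conn (w : V) : connect (@adj G) v w -> w = v \/ is_sink w.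
Proof.
move=> /connectP [[|z p] /=]; first by move=> _ ->; left.
case/andP=> /adj_idx [i hi ei] pz wl. right.
have [_ sz] := two_facts hi (f_equal fst ei). rewrite ei /= in sz.
have -> : w = z by apply: sink_connect sz _; apply/connectP; exists p.
exact: sz.
Qed.

Lemma after_a i : a < i -> i < N -> is_sink (ed i).2.
Proof.
move=> ai hi; case: (head_internal_or_sink hi) => // /(Hmax hi). by rewrite leqNgt ai.
Qed.

Lemma D6 i j k : i < j -> j < k -> k < N -> (ed i).2 = v -> (ed k).1 = v ->
  [\/ (ed j).1 = v, (ed j).2 = v | internal (ed j).2].
Proof.
move=> ij jk kN e2 e1. have jN := ltn_trans jk kN.
have := HP2 ij jk kN. rewrite /Rg e2 e1 connect0 => /(_ isT) /orP [].
- case/v_conn => [->|s]; first by constructor 1.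
  by have := outdeg_pos jN (erefl _); rewrite (eqP s).
- case: (head_internal_or_sink jN) => [ih|s]; first by constructor 3.
  by move/(sink_connect s) ->; constructor 2.
Qed.

Lemma D7 i j : i < j -> j < N -> (ed i).1 = v -> (ed j).2 = v -> False.
Proof.
move=> ij jN e1 e2. have [ai _] := two_facts (ltn_trans ij jN) e1.
have := Hmax jN. rewrite e2 => /(_ Hint) ja.
by have := leq_trans (ltn_trans ai ij) ja; rewrite ltnn.
Qed.

Lemma v_out : exists2 i, i < N & (ed i).1 = v.
Proof.
have := internal_not_sink Hint. rewrite /is_sink -lt0n /outdeg -has_count => /hasP [x hx /eqP ex].
case/(nthP d): hx => i hi ei. exists i => //. by rewrite /ed ei.
Qed.


Lemma count_pmap (T U : Type) (P : pred U) (f : T -> option U) s :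
  count P (pmap f s) = count (fun x => oapp P false (f x)) s.
Proof. elim: s => //= x s IH. by case: (f x) => /= [y|]; rewrite IH. Qed.

Lemma count_split (T : Type) (p q : pred T) s :
  count p s = count (fun x => p x && q x) s + count (fun x => p x && ~~ q x) s.
Proof. elim: s => //= x s ->. case: (p x) (q x) => [] [] /=; lia. Qed.

Lemma count_iota1 n i (c : bool) : i < n -> count (fun j => (j == i) && c) (iota 0 n) = c.
Proof.
move=> h. case: c.
- have -> : count (fun j => (j == i) && true) (iota 0 n) = count (pred1 i) (iota 0 n).
    by apply: eq_count => j; rewrite andbT.
  by rewrite (count_uniq_mem _ (iota_uniq 0 n)) mem_iota h.
- by apply/eqP; rewrite -leqn0 leqNgt -has_count; apply/hasP => -[j _]; rewrite andbF.
Qed.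

Local Notation A := (V + 'I_N)%type.
Definition o0 : 'I_N := Ordinal Ha.
Definition fr (i : nat) : 'I_N := insubd o0 i.
Lemma fr_val i : i < N -> val (fr i) = i.
Proof. by move=> h; rewrite /fr val_insubd /= h. Qed.
Lemma fr_eq i j : i < N -> j < N -> (fr i == fr j) = (i == j).
Proof. by move=> hi hj; rewrite -(inj_eq val_inj) !fr_val. Qed.

Definition hd1 i : A := if (ed i).2 == v then inr (fr i) else inl (ed i).2.
Definition tl2 i : A := if (ed i).1 == v then inl (ed i).1 else inr (fr i).
Definition cond2 i := [|| (ed i).1 == v, (ed i).2 == v | boundary (ed i).2].

Definition cls i : kind (A * A) (A * A) :=
  if (ed i).1 == v then KTwo (inl (ed i).1, inl (ed i).2)
  else if ((ed i).2 == v) || boundary (ed i).2 then KMid (inl (ed i).1, hd1 i) (inr (fr i), inl (ed i).2)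
  else KOne (inl (ed i).1, inl (ed i).2).
Definition ks := map cls (iota 0 N).
Definition esG := pmap k1 ks.
Definition esE := pmap k2 ks.
Local Notation RG := (raw esG).
Local Notation RE := (raw esE).

Lemma k1_cls i : k1 (cls i) = if (ed i).1 != v then Some (inl (ed i).1, hd1 i) else None.
Proof.
rewrite /cls /hd1. case: eqP => //= _. by case: eqP => /= _; case: (boundary (ed i).2).
Qed.

Lemma k2_cls i : k2 (cls i) = if cond2 i then Some (tl2 i, inl (ed i).2) else None.
Proof.
rewrite /cls /cond2 /tl2. case: eqP => //= _. by case: ifP.
Qed.

Lemma memG i : i < N -> (ed i).1 != v -> (inl (ed i).1, hd1 i) \in esG.
Proof.
move=> h n. rewrite /esG /ks pmap_map mem_pmap. apply/mapP. exists i; first by rewrite mem_iota.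
by rewrite k1_cls n.
Qed.

Lemma memG_inv x : x \in esG -> exists2 i, i < N & (ed i).1 != v /\ x = (inl (ed i).1, hd1 i).
Proof.
rewrite /esG /ks pmap_map mem_pmap => /mapP [i]. rewrite mem_iota /= k1_cls => h.
case: ifP => // n [->]. by exists i.
Qed.

Lemma memE i : i < N -> cond2 i -> (tl2 i, inl (ed i).2) \in esE.
Proof.
move=> h n. rewrite /esE /ks pmap_map mem_pmap. apply/mapP. exists i; first by rewrite mem_iota.
by rewrite k2_cls n.
Qed.

Lemma memE_inv x : x \in esE -> exists2 i, i < N & cond2 i /\ x = (tl2 i, inl (ed i).2).
Proof.
rewrite /esE /ks pmap_map mem_pmap => /mapP [i]. rewrite mem_iota /= k2_cls => h.
case: ifP => // n [->]. by exists i.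
Qed.

Lemma countG (P : pred (A * A)) :
  count P esG = count (fun i => ((ed i).1 != v) && P (inl (ed i).1, hd1 i)) (iota 0 N).
Proof.
rewrite /esG /ks pmap_map count_pmap. apply: eq_count => i /=. rewrite k1_cls. by case: ifP.
Qed.

Lemma countE (P : pred (A * A)) :
  count P esE = count (fun i => cond2 i && P (tl2 i, inl (ed i).2)) (iota 0 N).
Proof.
rewrite /esE /ks pmap_map count_pmap. apply: eq_count => i /=. rewrite k2_cls. by case: ifP.
Qed.

Lemma countV (P : pred (V * V)) : count P E = count (fun i => P (ed i)) (iota 0 N).
Proof. by rewrite {1}Eiota count_map. Qed.

Lemma raw_out_pos (T : finType) (es : seq (T * T)) x : x \in es -> 0 < outdeg (G := raw es) x.1.
Proof. move=> h; rewrite /outdeg -has_count; apply/hasP; by exists x. Qed.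
Lemma raw_in_pos (T : finType) (es : seq (T * T)) x : x \in es -> 0 < indeg (G := raw es) x.2.
Proof. move=> h; rewrite /indeg -has_count; apply/hasP; by exists x. Qed.

Lemma count0 (T : Type) (p : pred T) s : (forall x, ~~ p x) -> count p s = 0.
Proof. move=> h; elim: s => //= x s ->; by rewrite (negbTE (h x)). Qed.

Lemma inl_eq (x y : V) : (inl x == inl y :> A) = (x == y). Proof. by []. Qed.
Lemma inr_eq (x y : 'I_N) : (inr x == inr y :> A) = (x == y). Proof. by []. Qed.
Lemma inl_inr (x : V) y : (inl x == inr y :> A) = false. Proof. by []. Qed.
Lemma inr_inl (x : V) y : (inr y == inl x :> A) = false. Proof. by []. Qed.
Definition sumE := (inl_eq, inr_eq, inl_inr, inr_inl).

Lemma outRG_inl (u : V) : u != v -> outdeg (G := RG) (inl u) = outdeg u.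
Proof.
move=> uv; rewrite /outdeg countG countV. apply: eq_count => i /=. rewrite sumE.
by case: ((ed i).1 =P u) => [->|_]; rewrite ?uv ?andbF.
Qed.

Lemma outRG_inr j : outdeg (G := RG) (inr j) = 0.
Proof. rewrite /outdeg countG. apply: count0 => i /=. by rewrite sumE andbF. Qed.

Lemma inRG_inl (u : V) : u != v ->
  indeg (G := RG) (inl u) = count (fun i => ((ed i).1 != v) && ((ed i).2 == u)) (iota 0 N).
Proof.
move=> uv; rewrite /indeg countG. apply: eq_count => i /=. rewrite /hd1.
case: ((ed i).2 =P v) => [e|ne]; rewrite ?sumE //. by rewrite e (eq_sym v u) (negbTE uv) andbF.
Qed.

Lemma inRG_inr i : i < N -> indeg (G := RG) (inr (fr i)) = ((ed i).1 != v) && ((ed i).2 == v).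
Proof.
move=> hi; rewrite /indeg countG.
rewrite -(@count_iota1 N i (((ed i).1 != v) && ((ed i).2 == v)) hi). apply: eq_in_count => j.
rewrite mem_iota /= => hj. rewrite /hd1. case: (j =P i) => [->|ji].
- by case: ((ed i).2 =P v) => e; rewrite ?sumE ?eqxx ?andbT ?andbF //= e eqxx andbT.
- case: ((ed j).2 =P v) => e; rewrite ?sumE ?andbF //= ?fr_eq // (introF eqP ji) ?andbF //.
Qed.

Lemma inV_split (u : V) : indeg u =
  count (fun i => ((ed i).1 != v) && ((ed i).2 == u)) (iota 0 N) +
  count (fun i => ((ed i).1 == v) && ((ed i).2 == u)) (iota 0 N).
Proof.
rewrite /indeg countV (count_split _ (fun i => (ed i).1 != v)).
congr (_ + _); apply: eq_count => i /=; by rewrite andbC ?negbK.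
Qed.

Lemma noin_v (u : V) : u != v ->
  (~~ is_sink u \/ exists2 i, i < N & ((ed i).1 != v) && ((ed i).2 == u)) ->
  count (fun i => ((ed i).1 == v) && ((ed i).2 == u)) (iota 0 N) = 0.
Proof.
move=> uv h. apply/eqP; rewrite -leqn0 leqNgt -has_count.
apply/hasP => -[j]; rewrite mem_iota /= => hj /andP [/eqP t /eqP hu].
have [_ sk] := two_facts hj t. rewrite hu in sk.
case: h => [/negP //| [i hi hc]].
have c1 : 0 < count (fun i => ((ed i).1 != v) && ((ed i).2 == u)) (iota 0 N).
  by rewrite -has_count; apply/hasP; exists i => //; rewrite mem_iota.
have c2 : 0 < count (fun i => ((ed i).1 == v) && ((ed i).2 == u)) (iota 0 N).
  by rewrite -has_count; apply/hasP; exists j; rewrite ?mem_iota ?t ?hu ?eqxx.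
have := (Hprog u).2 sk. rewrite /deg (eqP sk) addn0 inV_split. lia.
Qed.

Lemma RG_same (u : V) : u != v ->
  (~~ is_sink u \/ exists2 i, i < N & ((ed i).1 != v) && ((ed i).2 == u)) ->
  indeg (G := RG) (inl u) = indeg u /\ outdeg (G := RG) (inl u) = outdeg u.
Proof.
move=> uv h. split; last exact: outRG_inl.
by rewrite inRG_inl // inV_split noin_v // addn0.
Qed.

Lemma outRE_inl (u : V) : u != v -> outdeg (G := RE) (inl u) = 0.
Proof.
move=> uv; rewrite /outdeg countE. apply: count0 => i /=. rewrite /tl2.
case: ((ed i).1 =P v) => e; rewrite ?sumE ?andbF //. by rewrite e (eq_sym v u) (negbTE uv) andbF.
Qed.

Lemma inRE_inr j : indeg (G := RE) (inr j) = 0.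
Proof. rewrite /indeg countE. apply: count0 => i /=. by rewrite sumE andbF. Qed.

Lemma outRE_inr i : i < N -> outdeg (G := RE) (inr (fr i)) = cond2 i && ((ed i).1 != v).
Proof.
move=> hi; rewrite /outdeg countE.
rewrite -(@count_iota1 N i (cond2 i && ((ed i).1 != v)) hi). apply: eq_in_count => j.
rewrite mem_iota /= => hj. rewrite /tl2. case: (j =P i) => [->|ji].
- case: ((ed i).1 =P v) => [e|e]; rewrite ?sumE /=.
  + by [].
  + by rewrite eqxx.
- case: ((ed j).1 =P v) => e; rewrite ?sumE ?andbF //= ?fr_eq // (introF eqP ji) ?andbF //.
Qed.

Lemma inRE_inl (u : V) : (u == v) || boundary u -> indeg (G := RE) (inl u) = indeg u.
Proof.
move=> h; rewrite /indeg countE countV. apply: eq_count => i /=. rewrite sumE.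
case: eqP => e; last by rewrite andbF. by rewrite andbT /cond2 e; case/orP: h => ->; rewrite ?orbT.
Qed.

Lemma outRG_v : outdeg (G := RG) (inl v) = 0.
Proof. rewrite /outdeg countG. apply: count0 => i /=. rewrite sumE. by case: eqP. Qed.

Lemma indeg_v_pos : 0 < indeg v.
Proof. exact: (indeg_pos Ha (erefl _)). Qed.

Lemma inRE_v_pos : 0 < indeg (G := RE) (inl v).
Proof. by rewrite inRE_inl ?eqxx // indeg_v_pos. Qed.

Lemma outRE_v_pos : 0 < outdeg (G := RE) (inl v).
Proof.
have [i hi t] := v_out. have c : cond2 i by rewrite /cond2 t eqxx.
have := raw_out_pos (memE hi c). by rewrite /tl2 t eqxx.
Qed.

Lemma notbnd_RE_v : ~~ boundary (G := RE) (inl v).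
Proof. rewrite /boundary /deg. have := inRE_v_pos; have := outRE_v_pos. lia. Qed.

Lemma bnd_RE_inr i : i < N -> cond2 i -> (ed i).1 != v -> boundary (G := RE) (inr (fr i)).
Proof. by move=> hi c t; rewrite /boundary /deg inRE_inr outRE_inr // c t. Qed.

Lemma bnd_RG_inr i : i < N -> (ed i).1 != v -> (ed i).2 == v -> boundary (G := RG) (inr (fr i)).
Proof. by move=> hi t h; rewrite /boundary /deg outRG_inr inRG_inr // t h. Qed.

Lemma deg_RG_same (u : V) : u != v ->
  (~~ is_sink u \/ exists2 i, i < N & ((ed i).1 != v) && ((ed i).2 == u)) ->
  deg (G := RG) (inl u) = deg u.
Proof. move=> uv h; have [e1 e2] := RG_same uv h. by rewrite /deg e1 e2. Qed.

Definition P1p := predC (@is_output RG).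
Definition Q1p := @is_output RG.
Definition Q2p := @is_input RE.
Definition P2p := predC (@is_input RE).

Lemma kp_cls i : i < N -> kp P1p Q1p P2p Q2p (cls i).
Proof.
move=> hi. rewrite /cls. case: ((ed i).1 =P v) => [t|t].
- by rewrite /= /P2p /= /is_input /= t notbnd_RE_v.
- have tn : (ed i).1 != v by apply/eqP.
  case: ifP => [c|c] /=.
  + rewrite /Q1p /Q2p /is_output /is_input /= bnd_RE_inr ?andbT //; last by rewrite /cond2 c orbT.
    rewrite /hd1. case: ((ed i).2 =P v) => [h|h]; first by apply: bnd_RG_inr => //; apply/eqP.
    have hv : (ed i).2 != v by apply/eqP.
    rewrite /boundary deg_RG_same //; last by right; exists i => //; rewrite tn eqxx.
    by move: c; rewrite (negbTE hv) /=.
  + rewrite /P1p /is_output /= /boundary deg_RG_same.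
    * by move/negbT: c; rewrite negb_or => /andP [_].
    * by move/negbT: c; rewrite negb_or => /andP [].
    * left; apply: internal_not_sink. by move/negbT: c; rewrite negb_or => /andP [_].
Qed.

Lemma all_kp : all (kp P1p Q1p P2p Q2p) ks.
Proof. rewrite /ks all_map; apply/allP => i; rewrite mem_iota /= => hi. exact: kp_cls. Qed.

Lemma wsh_idx (B C : Type) (s : seq (kind B C)) k0 n : n < size s ->
  (forall i, i < size s -> isOne (nth k0 s i) -> i < n) ->
  (forall i, i < size s -> isTwo (nth k0 s i) -> n < i) -> wsh s && hdnt s.
Proof.
elim: s n => [|k r IH] n //= hn h1 h2.
have h0 : ~~ isTwo k by apply/negP => t; have := h2 0 isT t.
have nowsh : (forall i, i < size r -> ~~ isOne (nth k0 r i)) -> wsh r.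
  elim: r {IH hn h1 h2} => [|y r IH'] //= hy.
  have hy' : forall i, i < size r -> ~~ isOne (nth k0 r i) by move=> i h; exact: (hy i.+1 h).
  have := hy 0 isT; case: y {hy} => //= [o i|e] _; exact: IH' hy'.
case: n hn h1 h2 => [|m] hn h1 h2.
- case: k h0 h1 h2 => [e|o i|e] h0 h1 h2 /=.
  + by have := h1 0 isT isT.
  + rewrite andbT; apply: nowsh => j hj; apply/negP => o1; by have := h1 j.+1 hj o1.
  + by [].
- have := IH m hn (fun i hi o => h1 i.+1 hi o) (fun i hi t => h2 i.+1 hi t). case/andP => wr hr.
  case: k h0 {h1 h2} => [e|o i|e] h0 /=; rewrite ?wr ?andbT //. by case: r {IH wr nowsh} hn hr.
Qed.

Lemma ks_nth i : i < N -> nth (cls 0) ks i = cls i.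
Proof. move=> h. by rewrite /ks (nth_map 0) ?size_iota // nth_iota. Qed.

Lemma wsh_ks : wsh ks && hdnt ks.
Proof.
apply: (@wsh_idx _ _ ks (cls 0) a); rewrite /ks size_map size_iota //.
- move=> i hi; rewrite -/ks ks_nth // /cls. case: ((ed i).1 =P v) => // t.
  case: ifP => //= /negbT; rewrite negb_or => /andP [hv hb].
  have := Hmax hi hb. rewrite leq_eqVlt => /orP [/eqP e|//]. by subst i; rewrite eqxx in hv.
- move=> i hi; rewrite -/ks ks_nth // /cls. case: ((ed i).1 =P v) => [t|t]; last by case: ifP.
  move=> _. by have [] := two_facts hi t.
Qed.

Definition m1 (e : A * A) : (A + A) * (A + A) := (inl e.1, inl e.2).
Definition mm (o i : A * A) : (A + A) * (A + A) := (inl o.1, inr i.2).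
Definition m2 (e : A * A) : (A + A) * (A + A) := (inr e.1, inr e.2).

Lemma raw_ks : raw_edges RE RG = map (kmerge m1 mm m2) ks.
Proof.
have /andP [w h] := wsh_ks.
have [s1 s2 s3] := blk_spec m1 mm m2 w. have b1 := blk1 h.
have := blk_all all_kp. rewrite b1 /= => hall.
rewrite (@raw_edges_blocks RE RG (blk ks).2).
- by rewrite s3 b1.
- by rewrite /= /esG s1.
- by rewrite /= /esE s2 b1.
- apply: sub_all hall => b /andP [/andP [/andP [h1 h2] _] _]. by move: h1 h2; rewrite /P1p /Q1p => -> ->.
- apply: sub_all hall => b /andP [/andP [_ h1] h2]. by move: h1 h2; rewrite /Q2p /P2p => -> ->.
Qed.

Definition phi' (x : (A + A)%type) : V :=
  match x with inl (inl u) => u | inr (inl u) => u | _ => v end.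

Lemma phi_merge i : emap phi' (kmerge m1 mm m2 (cls i)) = ed i.
Proof.
rewrite /cls. case: ifP => _; [|case: ifP => _]; rewrite /= ?/m1 ?/mm ?/m2 /emap /=; by case: (ed i).
Qed.

Local Notation K := (@keep RE RG).

Lemma keep_merge i : i < N -> K (kmerge m1 mm m2 (cls i)).1 && K (kmerge m1 mm m2 (cls i)).2.
Proof.
move=> hi. rewrite /cls. case: ((ed i).1 =P v) => [t|t].
- have c : cond2 i by rewrite /cond2 t eqxx.
  rewrite /= /keep /is_source -!lt0n t inRE_v_pos /=.
  have := raw_in_pos (memE hi c). by [].
- have tn : (ed i).1 != v by apply/eqP.
  have o1 := raw_out_pos (memG hi tn).
  case: ifP => c /=; rewrite /keep /is_sink /is_source -!lt0n o1 /=.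
  + have c2 : cond2 i by rewrite /cond2 c orbT.
    have := raw_in_pos (memE hi c2). by [].
  + move/negbT: c; rewrite negb_or => /andP [hv hb].
    rewrite outRG_inl // lt0n. apply: internal_not_sink. exact: hb.
Qed.

Lemma restrict_all (G2 G1 : pgraph) (s : seq ((vtx G1 + vtx G2) * (vtx G1 + vtx G2))) :
  all (fun e => @keep G2 G1 e.1 && @keep G2 G1 e.2) s ->
  map (emap val) (pmap (@restrict_edge G2 G1) s) = s.
Proof.
elim: s => //= e s IH /andP [/andP [h1 h2] /IH].
rewrite /restrict_edge (insubT (fun x => @keep G2 G1 x) h1) (insubT (fun x => @keep G2 G1 x) h2) /= => ->.
by case: e h1 h2.
Qed.

Definition phi (x : cvtx RE RG) : V := phi' (val x).

Lemma keep_inl y : K (inl y) -> exists u, y = inl u /\ u != v /\ ~~ is_sink u.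
Proof.
case: y => [u|j]; rewrite /keep /is_sink; last by rewrite outRG_inr.
case: (u =P v) => [->|uv]; first by rewrite outRG_v.
have uv' : u != v by apply/eqP.
rewrite outRG_inl // => h. by exists u.
Qed.

Lemma keep_inr y : K (inr y) -> exists u, y = inl u /\ (u = v \/ is_sink u).
Proof.
case: y => [u|j]; rewrite /keep /is_source; last by rewrite inRE_inr.
move=> h; exists u; split=> //. case: (u =P v) => [->|uv]; [by left|right].
move: h; rewrite -lt0n /indeg countE -has_count => /hasP [i]; rewrite mem_iota /= => hi /andP [c].
rewrite sumE => /eqP e.
rewrite /cond2 in c; case/or3P: c => [/eqP t | /eqP h | b].
- have [_ sk] := two_facts hi t. by rewrite -e.
- by rewrite -e h in uv.
- rewrite -e; apply: bnd_sink b _. exact: indeg_pos hi (erefl _).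
Qed.

Lemma phi_inj : injective phi.
Proof.
move=> [x kx] [y ky]; rewrite /phi /= => e. apply: val_inj => /=. move: e.
case: x kx => [x|x] kx; case: y ky => [y|y] ky.
- have [u [-> _]] := keep_inl kx; have [w [-> _]] := keep_inl ky. by move=> /= ->.
- have [u [-> [uv us]]] := keep_inl kx; have [w [-> hw]] := keep_inr ky.
  move=> /= e; subst w. case: hw => [h|h]; [by rewrite h eqxx in uv | by rewrite h in us].
- have [u [-> hu]] := keep_inr kx; have [w [-> [wv ws]]] := keep_inl ky.
  move=> /= e; subst w. case: hu => [h|h]; [by rewrite h eqxx in wv | by rewrite h in ws].
- have [u [-> _]] := keep_inr kx; have [w [-> _]] := keep_inr ky. by move=> /= ->.
Qed.

Lemma emb_phi : @emb (pop_comp RE RG) G phi.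
Proof.
split; first exact: phi_inj.
rewrite /= raw_ks.
have hk : all (fun e => K e.1 && K e.2) (map (kmerge m1 mm m2) ks).
  rewrite /ks -map_comp all_map; apply/allP => i; rewrite mem_iota /= => hi. exact: keep_merge.
have -> : map (emap phi) (pmap (@restrict_edge RE RG) (map (kmerge m1 mm m2) ks)) =
          map (emap phi') (map (emap val) (pmap (@restrict_edge RE RG) (map (kmerge m1 mm m2) ks))).
  by elim: (pmap _ _) => //= x s ->.
rewrite restrict_all // /ks -!map_comp. transitivity (map ed (iota 0 N)); last by rewrite -Eiota. apply: eq_map => i /=. exact: phi_merge.
Qed.

Lemma adj_hom (T : finType) (es : seq (T * T)) (psi : T -> V) :
  (forall x, x \in es -> emap psi x \in E) ->
  forall p q, adj (G := raw es) p q -> adj (psi p) (psi q).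
Proof. move=> h p q; rewrite /adj => /h. by []. Qed.

Lemma acyclic_hom (T : finType) (es : seq (T * T)) (psi : T -> V) :
  (forall x, x \in es -> emap psi x \in E) -> acyclic (raw es).
Proof.
move=> h x hx; apply/negP => c. have := Hacyc (h x hx).
by rewrite /= (connect_hom (adj_hom h) c).
Qed.

Definition psiG (x : A) : V := if x is inl u then u else v.
Definition psiE (x : A) : V := match x with inl u => u | inr j => (ed (val j)).1 end.

Lemma psiG_hd1 i : psiG (hd1 i) = (ed i).2.
Proof. rewrite /hd1; by case: eqP => [->|]. Qed.

Lemma psiE_tl2 i : i < N -> psiE (tl2 i) = (ed i).1.
Proof. move=> h; rewrite /tl2; case: eqP => [->|] //= _. by rewrite fr_val. Qed.

Lemma psiG_ok x : x \in esG -> emap psiG x \in E.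
Proof.
case/memG_inv => i hi [_ ->]. rewrite /emap /= psiG_hd1.
have -> : ((ed i).1, (ed i).2) = ed i by case: (ed i).
exact: mem_ed.
Qed.

Lemma psiE_ok x : x \in esE -> emap psiE x \in E.
Proof.
case/memE_inv => i hi [_ ->]. rewrite /emap /= psiE_tl2 //.
have -> : ((ed i).1, (ed i).2) = ed i by case: (ed i).
exact: mem_ed.
Qed.

Lemma acyclic_RG : acyclic RG.
Proof. exact: acyclic_hom psiG_ok. Qed.
Lemma acyclic_RE : acyclic RE.
Proof. exact: acyclic_hom psiE_ok. Qed.

Lemma all_pmap (T U : Type) (f : T -> option U) (p : pred U) s :
  all p (pmap f s) = all (fun x => if f x is Some a then p a else true) s.
Proof. elim: s => //= x s IH. by case: (f x) => /= [y|]; rewrite IH. Qed.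

Lemma pairwise_pmap (T U : Type) (f : T -> option U) (r : rel U) s :
  pairwise (fun x y => if f x is Some a then (if f y is Some b then r a b else true) else true) s ->
  pairwise r (pmap f s).
Proof.
elim: s => //= x s IH /andP [h1 /IH h2]. case: (f x) h1 => [y|] h1 //=.
by rewrite h2 andbT all_pmap.
Qed.

Lemma triplewise_pmap (T U : Type) (f : T -> option U) (r : U -> U -> U -> bool) s :
  triplewise (fun x y z => if f x is Some a then (if f y is Some b then
      (if f z is Some c then r a b c else true) else true) else true) s ->
  triplewise r (pmap f s).
Proof.
elim: s => //= x s IH /andP [h1 /IH h2]. case: (f x) h1 => [y|] h1 //=.
rewrite h2 andbT. exact: pairwise_pmap.
Qed.

Lemma pairwise_iota (r : rel nat) n : (forall i j, i < j -> j < n -> r i j) -> pairwise r (iota 0 n).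
Proof.
move=> h; apply/(pairwiseP 0) => i j; rewrite !inE size_iota => hi hj ij.
rewrite !nth_iota //. exact: h.
Qed.

Lemma triplewise_iota (r : nat -> nat -> nat -> bool) n :
  (forall i j k, i < j -> j < k -> k < n -> r i j k) -> triplewise r (iota 0 n).
Proof.
move=> h; apply/(triplewiseP _ 0) => i j k ij jk; rewrite size_iota => kn.
have jn := ltn_trans jk kn; have in_ := ltn_trans ij jn.
rewrite !nth_iota //. exact: h.
Qed.

Lemma L_avoid (z w : V) : z != v -> w != v -> ~~ is_sink w -> connect (@adj G) z w ->
  connect (@adj RG) (inl z) (inl w).
Proof.
move=> zv wv ws /connectP [p]. elim: p z zv => [|z1 p IH] z zv /=; first by move=> _ ->.
case/andP=> a1 pz wl.
have cw : connect (@adj G) z1 w by apply/connectP; exists p.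
have z1v : z1 != v.
  apply/eqP => e; rewrite e in cw. case: (v_conn cw) => [e2|s]; [by rewrite e2 eqxx in wv | by rewrite s in ws].
apply: connect_trans (IH z1 z1v pz wl). apply: connect1.
case: (adj_idx a1) => i hi ei.
have t : (ed i).1 != v by rewrite ei.
have := memG hi t. rewrite /hd1 ei /= (negbTE z1v). by [].
Qed.

Lemma lift_RG i j : i < N -> j < N -> (ed i).1 != v -> (ed j).1 != v -> Rg (ed i) (ed j) ->
  connect (@adj RG) (hd1 i) (inl (ed j).1).
Proof.
move=> hi hj ti tj; rewrite /Rg /hd1. case: ((ed i).2 =P v) => [e|e].
- rewrite e => /v_conn [h|s]; first by rewrite h eqxx in tj.
  by have := outdeg_pos hj (erefl _); rewrite (eqP s).
- apply: L_avoid => //; first exact/eqP.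
  by rewrite /is_sink -lt0n (outdeg_pos hj (erefl _)).
Qed.

Lemma connect_RG_G x y : connect (@adj RG) x y -> connect (@adj G) (psiG x) (psiG y).
Proof. exact: connect_hom (adj_hom psiG_ok) x y. Qed.

Lemma planar_RG : planar_l RG.
Proof.
rewrite /planar_l /= /esG /ks. apply/andP; split.
- apply: pairwise_pmap. rewrite pairwise_map. apply: pairwise_iota => i j ij jN.
  rewrite /relpre /= !k1_cls. case: ifP => ti //=; case: ifP => tj //=.
  apply/negP => /connect_RG_G; rewrite psiG_hd1 /= => c.
  by have := HP1 ij jN; rewrite /Rg c.
- apply: triplewise_pmap. rewrite triplewise_map. apply: triplewise_iota => i j k ij jk kN.
  have jN := ltn_trans jk kN; have iN := ltn_trans ij jN.
  rewrite /= !k1_cls. case: ifP => ti //=; case: ifP => tj //=; case: ifP => tk //=.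
  apply/implyP => /connect_RG_G; rewrite psiG_hd1 /= => c.
  have := HP2 ij jk kN; rewrite /Rg c => /(_ isT) /orP [h|h]; apply/orP; [left|right];
    apply: lift_RG => //.
Qed.

Lemma connect_noout (T : finType) (e : rel T) x y : (forall z, ~~ e x z) -> connect e x y -> y = x.
Proof.
move=> h /connectP [[|z p] /=]; first by move=> _ ->.
by case/andP=> exz; rewrite (negbTE (h z)) in exz.
Qed.

Lemma connect_noin (T : finType) (e : rel T) x y : (forall z, ~~ e z y) -> connect e x y -> x = y.
Proof.
move=> h /connectP [p]. case/lastP: p => [|p z] /=; first by move=> _ ->.
rewrite rcons_path last_rcons => /andP [_ ez] ey. subst z. by rewrite (negbTE (h _)) in ez.
Qed.

Lemma RE_noout (u : V) z : u != v -> ~~ adj (G := RE) (inl u) z.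
Proof.
move=> uv; apply/negP; rewrite /adj /= => /memE_inv [k hk [_ e]].
move: e; rewrite /tl2; case: ((ed k).1 =P v) => // tk [[e1] _]. by rewrite e1 tk eqxx in uv.
Qed.

Lemma RE_noin j z : ~~ adj (G := RE) z (inr j).
Proof. apply/negP; rewrite /adj /= => /memE_inv [k hk [_ []]] //. Qed.

Lemma RE_conn i j : j < N -> connect (@adj RE) (inl (ed i).2) (tl2 j) -> (ed i).2 = v /\ (ed j).1 = v.
Proof.
move=> hj c. case: ((ed i).2 =P v) => [hv|hv].
- split=> //. move: c; rewrite hv /tl2; case: ((ed j).1 =P v) => // tj.
  have nin : forall z, ~~ adj (G := RE) z (inr (fr j)) by move=> z; exact: RE_noin.
  by move/(connect_noin nin).
- have hvn : (ed i).2 != v by apply/eqP.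
  have nout : forall z, ~~ adj (G := RE) (inl (ed i).2) z by move=> z; exact: RE_noout.
  have := connect_noout nout c. rewrite /tl2; case: ((ed j).1 =P v) => // tj [e].
  by rewrite -e tj in hv.
Qed.

Lemma RE_back i j : (ed i).2 = v -> (ed j).1 = v -> connect (@adj RE) (inl (ed i).2) (tl2 j).
Proof. move=> hi hj. by rewrite /tl2 hj eqxx hi connect0. Qed.

Lemma planar_RE : planar_l RE.
Proof.
rewrite /planar_l /= /esE /ks. apply/andP; split.
- apply: pairwise_pmap. rewrite pairwise_map. apply: pairwise_iota => i j ij jN.
  have iN := ltn_trans ij jN.
  rewrite /relpre /= !k2_cls. case: ifP => ci //=; case: ifP => cj //=. rewrite /Rg /=.
  apply/negP => /(RE_conn iN) [h1 h2]. exact: D7 ij jN h2 h1.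
- apply: triplewise_pmap. rewrite triplewise_map. apply: triplewise_iota => i j k ij jk kN.
  rewrite /= !k2_cls. case: ifP => ci //=; case: ifP => cj //=; case: ifP => ck //=.
  rewrite /Rg /=. apply/implyP => /(RE_conn kN) [h1 h2].
  case: (D6 ij jk kN h1 h2) => [e|e|e].
  + apply/orP; left. exact: RE_back.
  + apply/orP; right. exact: RE_back.
  + rewrite /cond2 in cj; case/or3P: cj => [/eqP t|/eqP t|b].
    * apply/orP; left. exact: RE_back.
    * apply/orP; right. exact: RE_back.
    * by rewrite /internal b in e.
Qed.

Lemma prog_same (x : A) (u : V) :
  indeg (G := RG) x = indeg u -> outdeg (G := RG) x = outdeg u ->
  (is_source (G := RG) x -> deg (G := RG) x = 1) /\ (is_sink (G := RG) x -> deg (G := RG) x = 1).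
Proof.
move=> e1 e2; have [h1 h2] := Hprog u.
by rewrite /is_source /is_sink /deg e1 e2; split => h; [apply: h1 | apply: h2].
Qed.

Lemma RG_ends x : x \in ends esG ->
  (is_source (G := RG) x -> deg (G := RG) x = 1) /\ (is_sink (G := RG) x -> deg (G := RG) x = 1).
Proof.
case/endsP => e /memG_inv [i hi [ti ->]] /= [<-|<-].
- have ns : ~~ is_sink (ed i).1 by rewrite /is_sink -lt0n (outdeg_pos hi (erefl _)).
  have [e1 e2] := RG_same ti (or_introl ns). exact: prog_same e1 e2.
- rewrite /hd1. case: ((ed i).2 =P v) => [hv|hv].
  + have hb := bnd_RG_inr hi ti (introT eqP hv).
    by move: hb; rewrite /boundary => /eqP ->.
  + have hvn : (ed i).2 != v by apply/eqP.
    have [e1 e2] := RG_same hvn (or_intror (ex_intro2 _ _ i hi (introT andP (conj ti (eqxx _))))).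
    exact: prog_same e1 e2.
Qed.

Lemma RE_ends x : x \in ends esE -> x = inl v \/ deg (G := RE) x = 1.
Proof.
case/endsP => e /memE_inv [i hi [ci ->]] /= [<-|<-].
- rewrite /tl2; case: ((ed i).1 =P v) => [->|tv]; first by left.
  right. have := bnd_RE_inr hi ci (introN eqP tv). by rewrite /boundary => /eqP.
- case: ((ed i).2 =P v) => [->|hv]; first by left. right.
  have hvn : (ed i).2 != v by apply/eqP.
  have sk : is_sink (ed i).2.
    rewrite /cond2 in ci; case/or3P: ci => [/eqP t|/eqP t //|b].
    * by have [] := two_facts hi t.
    * apply: bnd_sink b _. exact: indeg_pos hi (erefl _).
  have b : boundary (ed i).2 by rewrite /boundary; apply/eqP; exact: (Hprog _).2 sk.
  rewrite /deg outRE_inl // addn0 inRE_inl ?b ?orbT //.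
  have := (Hprog _).2 sk. by rewrite /deg (eqP sk) addn0.
Qed.

Lemma count_lt (T : eqType) (p : pred T) s x : x \in s -> ~~ p x -> count p s < size s.
Proof.
move=> hx px. rewrite -(count_predC p s) -[X in X < _]addn0 ltn_add2l -has_count.
apply/hasP; by exists x.
Qed.

Lemma size_esG : size esG < N.
Proof.
rewrite /esG size_pmap /ks count_map.
have [i hi t] := v_out.
have := @count_lt _ (preim cls (fun x => k1 x)) (iota 0 N) i. rewrite size_iota. apply.
- by rewrite mem_iota.
- by rewrite /= k1_cls t eqxx.
Qed.

Lemma oapp_kp (B : Type) (Q1 Q2 : pred B) (k : kind B B) :
  kp (predC Q1) Q1 (predC Q2) Q2 k -> oapp Q1 false (k1 k) = oapp Q2 false (k2 k).
Proof. case: k => [e|o i|e] /=; [move/negbTE -> | case/andP=> -> -> | move/negbTE ->] => //. Qed.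

Lemma counts_eq : count (@is_output RG) esG = count (@is_input RE) esE.
Proof.
rewrite /esG /esE !count_pmap. have := all_kp. rewrite /ks !count_map all_map => /allP h.
apply: eq_in_count => i hi /=. exact: oapp_kp (h i hi).
Qed.

Lemma emb_id (X : pgraph) : @emb X X id.
Proof. split; first by move=> x y. by elim: (edges X) => //= e s ->; case: e. Qed.

Lemma no_iso (y : V) : exists2 ee, ee \in E & (ee.1 = y \/ ee.2 = y).
Proof.
case h: (indeg y == 0).
- have := (Hprog y).1 h. rewrite /deg (eqP h) add0n => o.
  have : 0 < outdeg y by rewrite o.
  rewrite /outdeg -has_count => /hasP [ee he /eqP e]. by exists ee => //; left.
- move/negbT: h; rewrite -lt0n /indeg -has_count => /hasP [ee he /eqP e]. by exists ee => //; right.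
Qed.

Lemma main_step :
  is_pop (mkG esG) /\ size (edges (mkG esG)) < N /\ elementary_pop (mkG esE) /\
  count (@is_output (mkG esG)) (edges (mkG esG)) = count (@is_input (mkG esE)) (edges (mkG esE)) /\
  (forall (X : pgraph) (f : vtx X -> vtx (mkG esG)), emb f -> pop_iso (pop_comp (mkG esE) X) G).
Proof.
have eG := emb_mkG esG; have eE := emb_mkG esE.
split; [|split; [|split; [|split]]].
- apply/(is_pop_emb eG). split; first exact: acyclic_RG.
  split; first by apply/(planarP acyclic_RG); exact: planar_RG.
  move=> x; exact: RG_ends (valP x).
- have := congr1 size (emb_edges eG). rewrite size_map => ->. exact: size_esG.
- split.
  + apply/(is_pop_emb eE). split; first exact: acyclic_RE.
    split; first by apply/(planarP acyclic_RE); exact: planar_RE.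
    move=> x; case: (RE_ends (valP x)) => [e|->]; last by [].
    rewrite /= e. split; rewrite /is_source /is_sink => /eqP h; [have := inRE_v_pos | have := outRE_v_pos]; by rewrite h.
  + apply/(elementary_emb eE) => x y ix iy _. apply: val_inj => /=.
    case: (RE_ends (valP x)) => [ex|ex]; last by rewrite /internal /boundary ex in ix.
    case: (RE_ends (valP y)) => [ey|ey]; last by rewrite /internal /boundary ey in iy.
    by rewrite ex ey.
- by rewrite -(count_output_emb eG) -(count_input_emb eE) counts_eq.
- move=> X f hf.
  have e1 := comp_emb hf (emb_id (mkG esE)).
  have e2 := comp_emb eG eE.
  have e := emb_comp (emb_comp e1 e2) emb_phi.
  apply: (emb_iso e) => y. case: (no_iso y) => ee.
  move=> he; have eq := emb_edges e. have : ee \in map (emap (phi \o (cF eG eE \o cF hf (emb_id (mkG esE))))) (edges (pop_comp (mkG esE) X)) by rewrite eq.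
  move=> /mapP [c hc ->] /= [<-|<-]; by eexists.
Qed.
End GFacts.

Lemma main_ind n : forall G : pgraph, size (edges G) < n -> is_pop G ->
  exists (G1 : pgraph) (gs : seq pgraph),
    elementary_pop G1 /\ decomp_chain G1 gs /\
    pop_iso (foldl (fun acc g => pop_comp g acc) G1 gs) G.
Proof.
elim: n => [//|n IH] G hn hpop.
case: (pickP (fun u : vtx G => internal u)) => [u iu|noint]; last first.
  exists G, [::]; split; [split=> // x y; by rewrite noint | split=> //].
  apply: (emb_iso (emb_id G)) => y; by exists y.
case: hpop => [[Hacyc Hprog] Hpl].
have /andP [pw tw] : planar_l G by apply/(planarP Hacyc).
have : 0 < indeg u.
  rewrite lt0n; apply/negP => s. have := (Hprog u).1 s.
  by move: iu; rewrite /internal /boundary => /negP + /eqP.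
rewrite /indeg -has_count => /hasP [d hd /eqP du].
have exP : exists i, (i < size (edges G)) && internal (nth d (edges G) i).2.
  case/(nthP d): hd => i hi ei. exists i; by rewrite hi ei du iu.
have ubP : forall i, (i < size (edges G)) && internal (nth d (edges G) i).2 -> i <= size (edges G).
  by move=> i /andP [h _]; exact: ltnW.
case: (ex_maxnP exP ubP) => a /andP [Ha Hint] Hmax'.
have Hmax : forall i, i < size (edges G) -> internal (ed d i).2 -> i <= a.
  by move=> i hi hint; apply: Hmax'; rewrite hi.
have HP1 : forall i j, i < j -> j < size (edges G) -> ~~ Rg (ed d j) (ed d i).
  move=> i j ij jN. move/(pairwiseP d): pw => /(_ i j). rewrite !inE. apply => //.
  exact: ltn_trans ij jN.
have HP2 : forall i j k, i < j -> j < k -> k < size (edges G) -> Rg (ed d i) (ed d k) ->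
    Rg (ed d i) (ed d j) || Rg (ed d j) (ed d k).
  move=> i j k ij jk kN. move/(triplewiseP _ d): tw => /(_ i j k ij jk kN). by move/implyP.
have [popG [szG [elE [cnt comp]]]] := main_step Hacyc Hprog HP1 HP2 Ha Hint Hmax.
have [H1 [hs [el [dc iso]]]] := IH _ (leq_trans szG (leq_trans hn (leqnn _))) popG.
exists H1, (rcons hs (mkG (esE d Ha))). split=> //. split.
- apply: decomp_chain_rcons => //. rewrite /composable.
  case: (iso_emb iso) => f hf. by rewrite -(count_output_emb hf) cnt.
- rewrite foldl_rcons. case: (iso_emb iso) => f hf. exact: comp f hf.
Qed.

Unset Implicit Arguments.

Theorem proposition2p11 (G : pgraph) :
  is_pop G ->
  exists (G1 : pgraph) (gs : seq pgraph),
    elementary_pop G1 /\ decomp_chain G1 gs /\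
    pop_iso (foldl (fun acc g => pop_comp g acc) G1 gs) G.
Proof. exact: (@main_ind (size (edges G)).+1 G (ltnSn _)). Qed.
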